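(* Let $m,n\ge 1$ and let $\mathcal L:\mathbb R^{m\times n}\to\mathbb R$ be differentiable and attain its minimum, and assume there is $L>0$ such that $\|\nabla\mathcal L(\Theta)-\nabla\mathcal L(\Theta')\|_*\le L\|\Theta-\Theta'\|_2$ for all $\Theta,\Theta'\in\mathbb R^{m\times n}$. Let $\{\Theta_t\}$ be generated by the AdaGO algorithm (described in the context) using the full batch, i.e. $G_t=\nabla\mathcal L(\Theta_{t-1})$ for all $t$, and momentum $\mu=0$. Write $\Delta:=\mathcal L(\Theta_0)-\min_\Theta\mathcal L(\Theta)$. Fix any $q>0$ and, for a horizon $T$, choose $\epsilon=T^{-1/2}$ and $\eta=T^{-q}$. Then, for all sufficiently large $T$, \[ \frac1T\sum_{t=1}^T\mathbb E\big[\|\nabla\mathcal L(\Theta_{t-1})\|_*\big]\le \mathcal O\!\left(\frac{\Delta+L}{\sqrt T}\right). \]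
   Context: $\|\cdot\|_*$ is the nuclear norm, $\|\cdot\|_2$ the spectral norm, $\|\cdot\|_F$ the Frobenius norm, and $\|\cdot\|$ denotes a fixed matrix norm (e.g. Frobenius) used in the stepsize. For $M\in\mathbb R^{m\times n}$, $\mathrm{Orth}(M):=\arg\min_{O\in\mathbb R^{m\times n}}\{\|O-M\|_F: OO^T=I_m\text{ or }O^TO=I_n\}$; equivalently, if $M=U\Sigma V^T$ is a reduced SVD then $\mathrm{Orth}(M)=UV^T$. AdaGO algorithm: inputs are a learning rate $\eta>0$, momentum $\mu\in[0,1)$, constants $\gamma>0$, $\epsilon>0$. Initialize $\Theta_0\in\mathbb R^{m\times n}$, $M_0=0$, $v_0>0$. For $t=1,\dots,T$: compute the gradient $G_t$ at $\Theta_{t-1}$; set $M_t=\mu M_{t-1}+(1-\mu)G_t$; $v_t^2=v_{t-1}^2+\min\{\|G_t\|^2,\gamma^2\}$; $O_t=\mathrm{Orth}(M_t)$; $\Theta_t=\Theta_{t-1}-\max\{\epsilon,\ \eta\,\min\{\|G_t\|,\gamma\}/v_t\}\,O_t$. The $\mathcal O(\cdot)$ hides an absolute constant. *)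

(* Defs.v *)
From HB Require Import structures.
From mathcomp Require Import all_boot all_order all_algebra.
From mathcomp Require Import all_classical all_reals all_analysis.
Set Implicit Arguments. Unset Strict Implicit. Unset Printing Implicit Defensive.
Import Order.TTheory GRing.Theory Num.Theory.
Import numFieldNormedType.Exports.
Local Open Scope classical_set_scope.
Local Open Scope ring_scope.

Section Defs.
Variable R : realType.

Definition frob {m n : nat} (A : 'M[R]_(m, n)) : R :=
  Num.sqrt (\sum_(i < m) \sum_(j < n) A i j ^+ 2).

Definition mxdot {m n : nat} (A B : 'M[R]_(m, n)) : R :=
  \sum_(i < m) \sum_(j < n) A i j * B i j.

Definition spec_norm {m n : nat} (A : 'M[R]_(m, n)) : R :=
  sup [set frob (A *m x) | x in [set x : 'cV[R]_n | frob x = 1]].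

(* nuclear norm = trace norm, defined as the dual norm of the spectral norm
   (equal to the sum of singular values) *)
Definition nuc_norm {m n : nat} (A : 'M[R]_(m, n)) : R :=
  sup [set mxdot O A | O in [set O : 'M[R]_(m, n) | spec_norm O <= 1]].

Definition semi_orth {m n : nat} (O : 'M[R]_(m, n)) : Prop :=
  O *m O^T = 1%:M \/ O^T *m O = 1%:M.

Definition is_orth {m n : nat} (M O : 'M[R]_(m, n)) : Prop :=
  semi_orth O /\ forall O', semi_orth O' -> frob (O - M) <= frob (O' - M).

Definition grad {m n : nat} (f : 'M[R]_(m, n) -> R) (X : 'M[R]_(m, n))
  : 'M[R]_(m, n) := \matrix_(i, j) ('D_(delta_mx i j) f X).

(* A run of AdaGO with full-batch gradients G_t = grad f (Theta_{t-1}),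
   stepsize norm ||.|| = Frobenius norm.  Indexing: Theta t = Θ_t, M t = M_t,
   v t = v_t, O t = O_t (O 0 unused). *)
Definition adago_run {m n : nat} (f : 'M[R]_(m, n) -> R)
  (eta mu gamma eps : R) (Theta0 : 'M[R]_(m, n)) (v0 : R)
  (Theta M O : nat -> 'M[R]_(m, n)) (v : nat -> R) : Prop :=
  [/\ Theta 0%N = Theta0, M 0%N = 0, v 0%N = v0 &
   forall t : nat,
     let G := grad f (Theta t) in
     [/\ M t.+1 = mu *: M t + (1 - mu) *: G,
         v t.+1 = Num.sqrt (v t ^+ 2 + Num.min (frob G ^+ 2) (gamma ^+ 2)),
         is_orth (M t.+1) (O t.+1) &
         Theta t.+1 = Theta t
           - Num.max eps (eta * Num.min (frob G) gamma / v t.+1) *: O t.+1]].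

End Defs.

(* Main.v *)
Require Import Defs.
From HB Require Import structures.
From mathcomp Require Import all_boot all_order all_algebra.
From mathcomp Require Import all_classical all_reals all_analysis.
From mathcomp Require Import ring lra zify.
Import Order.TTheory GRing.Theory Num.Theory.
Import numFieldNormedType.Exports.
Local Open Scope ring_scope.
Set Implicit Arguments. Unset Strict Implicit. Unset Printing Implicit Defensive.

Section LA.
Variable R : realType.
Implicit Types (m n k : nat).

Lemma mxdotE m n (A B : 'M[R]_(m, n)) : mxdot A B = \tr (A *m B^T).
Proof.
rewrite /mxdot /mxtrace; apply: eq_bigr => i _; rewrite mxE.
by apply: eq_bigr => j _; rewrite mxE.
Qed.

Lemma mxdotC m n (A B : 'M[R]_(m, n)) : mxdot A B = mxdot B A.
Proof. by rewrite /mxdot; apply: eq_bigr => i _; apply: eq_bigr => j _; rewrite mulrC. Qed.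

Lemma mxdotDl m n (A B C : 'M[R]_(m, n)) : mxdot (A + B) C = mxdot A C + mxdot B C.
Proof. by rewrite !mxdotE mulmxDl mxtraceD. Qed.

Lemma mxdotZl m n a (A C : 'M[R]_(m, n)) : mxdot (a *: A) C = a * mxdot A C.
Proof. by rewrite !mxdotE -scalemxAl mxtraceZ. Qed.

Lemma mxdotNl m n (A C : 'M[R]_(m, n)) : mxdot (- A) C = - mxdot A C.
Proof. by rewrite -scaleN1r mxdotZl mulN1r. Qed.

Lemma mxdotBl m n (A B C : 'M[R]_(m, n)) : mxdot (A - B) C = mxdot A C - mxdot B C.
Proof. by rewrite mxdotDl mxdotNl. Qed.

Lemma mxdotDr m n (A B C : 'M[R]_(m, n)) : mxdot C (A + B) = mxdot C A + mxdot C B.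
Proof. by rewrite !(mxdotC C) mxdotDl. Qed.
Lemma mxdotZr m n a (A C : 'M[R]_(m, n)) : mxdot C (a *: A) = a * mxdot C A.
Proof. by rewrite !(mxdotC C) mxdotZl. Qed.
Lemma mxdotNr m n (A C : 'M[R]_(m, n)) : mxdot C (- A) = - mxdot C A.
Proof. by rewrite !(mxdotC C) mxdotNl. Qed.
Lemma mxdotBr m n (A B C : 'M[R]_(m, n)) : mxdot C (A - B) = mxdot C A - mxdot C B.
Proof. by rewrite !(mxdotC C) mxdotBl. Qed.
Lemma mxdot0l m n (C : 'M[R]_(m, n)) : mxdot 0 C = 0.
Proof. by rewrite mxdotE mul0mx mxtrace0. Qed.

Lemma mxdot_ge0 m n (A : 'M[R]_(m, n)) : 0 <= mxdot A A.
Proof. by rewrite /mxdot sumr_ge0 // => i _; rewrite sumr_ge0 // => j _; rewrite -expr2 sqr_ge0. Qed.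

Lemma frob_sq m n (A : 'M[R]_(m, n)) : frob A ^+ 2 = mxdot A A.
Proof.
rewrite /frob sqr_sqrtr; last by rewrite sumr_ge0 // => i _; rewrite sumr_ge0 // => j _; rewrite sqr_ge0.
by rewrite /mxdot; apply: eq_bigr => i _; apply: eq_bigr => j _; rewrite expr2.
Qed.

Lemma frob_ge0 m n (A : 'M[R]_(m, n)) : 0 <= frob A.
Proof. exact: sqrtr_ge0. Qed.

Lemma mxdot_tr m n (A B : 'M[R]_(m, n)) : mxdot A^T B^T = mxdot A B.
Proof. by rewrite !mxdotE trmxK -mxtrace_tr trmx_mul trmxK mxtrace_mulC. Qed.

Lemma mxdot_adj m n p (A : 'M[R]_(m, n)) (x : 'M[R]_(n, p)) y :
  mxdot (A *m x) y = mxdot x (A^T *m y).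
Proof. by rewrite !mxdotE trmx_mul trmxK -mulmxA mxtrace_mulC -mulmxA. Qed.

Lemma mxdot_adjr m n p (A : 'M[R]_(n, p)) (x : 'M[R]_(m, n)) y :
  mxdot (x *m A) y = mxdot x (y *m A^T).
Proof. by rewrite !mxdotE trmx_mul trmxK mulmxA. Qed.


Lemma mxdot_eq0 m n (A : 'M[R]_(m, n)) : mxdot A A = 0 -> A = 0.
Proof.
move=> h; apply/matrixP => i j; rewrite mxE.
have h1 : forall i0 : 'I_m, \sum_(j0 < n) A i0 j0 * A i0 j0 = 0.
  move/eqP: h; rewrite /mxdot psumr_eq0; last first.
    by move=> i1 _; rewrite sumr_ge0 // => j1 _; rewrite -expr2 sqr_ge0.
  by move=> /allP H i0; apply/eqP; apply: H; rewrite mem_index_enum.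
move/eqP: (h1 i); rewrite psumr_eq0; last by move=> j1 _; rewrite -expr2 sqr_ge0.
move=> /allP /(_ j (mem_index_enum _)) /=.
by rewrite mulf_eq0 orbb => /eqP.
Qed.

Lemma cv_dot k (v w : 'cV[R]_k) : v^T *m w = (mxdot v w)%:M.
Proof.
apply/matrixP => a b; rewrite !ord1 !mxE /mxdot.
apply: eq_bigr => i _; rewrite big_ord1 !mxE //.
Qed.

Lemma quad_cs (a b c : R) : 0 <= c -> (forall t, 0 <= a - 2 * t * b + t ^+ 2 * c) -> b ^+ 2 <= a * c.
Proof.
move=> c0 H.
have [cz|cp] := eqVneq c 0.
  subst c; rewrite mulr0.
  have [bz|bnz] := eqVneq b 0; first by subst b; rewrite expr0n /=.
  have := H ((a + 1) / (2 * b)).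
  have -> : a - 2 * ((a + 1) / (2 * b)) * b + ((a + 1) / (2 * b)) ^+ 2 * 0 = -1.
    by field; rewrite bnz.
  by rewrite ler0N1.
have cpos : 0 < c by rewrite lt_neqAle eq_sym cp c0.
have := H (b / c).
have -> : a - 2 * (b / c) * b + (b / c) ^+ 2 * c = a - b ^+ 2 / c.
  by field; rewrite cp.
by rewrite subr_ge0 ler_pdivrMr.
Qed.

Lemma mxdot_cs m n (A B : 'M[R]_(m, n)) : mxdot A B ^+ 2 <= mxdot A A * mxdot B B.
Proof.
apply: quad_cs; first exact: mxdot_ge0.
move=> t.
have := mxdot_ge0 (A - t *: B).
rewrite !(mxdotBl, mxdotBr, mxdotZl, mxdotZr) (mxdotC B A).
by congr (_ <= _); ring.
Qed.

Lemma quad0 (r a : R) : (forall s, s * r <= s ^+ 2 * a) -> r = 0.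
Proof.
move=> H.
have hb : 0 < `|a| + 1 by rewrite ltr_wpDl.
have := H (r / (`|a| + 1)).
set b := `|a| + 1.
have ha : a <= b - 1 by rewrite /b addrK ler_norm.
move=> h.
have h3 : r ^+ 2 * b <= r ^+ 2 * a.
  have : (r / b) * r * b ^+ 2 <= (r / b) ^+ 2 * a * b ^+ 2.
    by rewrite ler_pM2r // exprn_gt0.
  have -> : r / b * r * b ^+ 2 = r ^+ 2 * b by field; rewrite gt_eqF.
  by have -> : (r / b) ^+ 2 * a * b ^+ 2 = r ^+ 2 * a by field; rewrite gt_eqF.
have h4 : r ^+ 2 * a <= r ^+ 2 * (b - 1) by rewrite ler_wpM2l // sqr_ge0.
have h5 : r ^+ 2 <= 0 by nra.
by apply/eqP; rewrite -sqrf_eq0 eq_le h5 sqr_ge0.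
Qed.


Definition refl k (u : 'cV[R]_k) : 'M[R]_k := 1%:M - (2 / mxdot u u) *: (u *m u^T).

Lemma refl_tr k (u : 'cV[R]_k) : (refl u)^T = refl u.
Proof. by rewrite /refl linearB linearZ /= trmx1 trmx_mul trmxK. Qed.

Lemma uuuu k (u : 'cV[R]_k) : (u *m u^T) *m (u *m u^T) = mxdot u u *: (u *m u^T).
Proof. by rewrite mulmxA -(mulmxA u) cv_dot mul_mx_scalar -scalemxAl. Qed.

Lemma refl_orth k (u : 'cV[R]_k) : mxdot u u != 0 -> refl u *m (refl u)^T = 1%:M.
Proof.
move=> nz; rewrite refl_tr /refl.
set c := 2 / mxdot u u; set U := u *m u^T.
rewrite mulmxBl mul1mx mulmxBr mulmx1 -scalemxAr -scalemxAl uuuu scalerA scalerA.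
have -> : c * c * mxdot u u = c + c by rewrite /c; field.
rewrite -/U.
rewrite scalerDl; set V := c *: U.
have -> : V - (V + V) = - V by rewrite opprD addrA subrr sub0r.
by rewrite opprK subrK.
Qed.

Lemma orthM k (P Q : 'M[R]_k) : P *m P^T = 1%:M -> Q *m Q^T = 1%:M ->
  (P *m Q) *m (P *m Q)^T = 1%:M.
Proof. by move=> hP hQ; rewrite trmx_mul mulmxA -(mulmxA P) hQ mulmx1 hP. Qed.

Lemma tr_uuY k (u : 'cV[R]_k) (Y : 'M[R]_k) : \tr (u *m u^T *m Y) = mxdot u (Y *m u).
Proof.
rewrite -mulmxA mxtrace_mulC -mulmxA cv_dot mxtrace_scalar.
by [].
Qed.

Lemma tr_refl k (u : 'cV[R]_k) (Y : 'M[R]_k) :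
  \tr (refl u *m Y) = \tr Y - 2 / mxdot u u * mxdot u (Y *m u).
Proof. by rewrite /refl mulmxBl mul1mx raddfB /= -scalemxAl mxtraceZ tr_uuY. Qed.

Lemma refl_app k (u : 'cV[R]_k) (Y : 'M[R]_k) (w : 'cV[R]_k) :
  refl u *m Y *m w = Y *m w - (2 / mxdot u u * mxdot u (Y *m w)) *: u.
Proof.
rewrite /refl mulmxBl mul1mx mulmxBl -!scalemxAl -!mulmxA cv_dot mul_mx_scalar scalerA.
by [].
Qed.


Lemma mxdot_delta k (a : 'I_k) (w : 'cV[R]_k) : mxdot (delta_mx a 0) w = w a 0.
Proof.
rewrite /mxdot (bigD1 a) //= big_ord1 mxE !eqxx mul1r big1 ?addr0 //.
by move=> i /negbTE ia; rewrite big_ord1 mxE ia mul0r.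
Qed.

Lemma bil_delta k (X : 'M[R]_k) (a b : 'I_k) :
  mxdot (delta_mx a 0 : 'cV[R]_k) (X *m delta_mx b 0) = X a b.
Proof. by rewrite mxdot_delta -colE mxE. Qed.

Lemma dot_delta k (a b : 'I_k) :
  mxdot (delta_mx a 0 : 'cV[R]_k) (delta_mx b 0) = (a == b)%:R.
Proof. by rewrite mxdot_delta mxE eqxx andbT. Qed.

Lemma sym_psd_of_max k (X : 'M[R]_k) :
  (forall Q : 'M[R]_k, Q *m Q^T = 1%:M -> \tr (Q *m X) <= \tr X) ->
  X^T = X /\ forall u : 'cV[R]_k, 0 <= mxdot u (X *m u).
Proof.
move=> H; split; last first.
  move=> u; have [z|nz] := eqVneq (mxdot u u) 0.
    by rewrite (mxdot_eq0 z) mxdot0l.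
  have := H _ (refl_orth nz); rewrite tr_refl gerDl oppr_le0.
  rewrite pmulr_rge0 // divr_gt0 // lt_neqAle eq_sym nz mxdot_ge0 //.
apply/matrixP => i j; rewrite mxE.
have [->//|ij] := eqVneq i j.
set u : 'cV[R]_k := delta_mx i 0.
have Hs : forall s : R, s * (X j i - X i j) <= s ^+ 2 * (X i i + X j j).
  move=> s.
  set v : 'cV[R]_k := u + s *: delta_mx j 0.
  have uu : mxdot u u = 1 by rewrite dot_delta eqxx.
  have uv : mxdot u v = 1.
    by rewrite mxdotDr mxdotZr !dot_delta eqxx (negbTE ij) mulr0 addr0.
  have vv : mxdot v v = 1 + s ^+ 2.
    rewrite mxdotDl !mxdotDr !mxdotZl !mxdotZr !dot_delta eqxx (negbTE ij) eq_sym (negbTE ij).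
    by rewrite eqxx /=; ring.
  have vnz : mxdot v v != 0 by rewrite vv gt_eqF // ltr_pwDl // sqr_ge0.
  have unz : mxdot u u != 0 by rewrite uu oner_eq0.
  have := H _ (orthM (refl_orth unz) (refl_orth vnz)).
  rewrite -mulmxA tr_refl tr_refl refl_app mxdotBr mxdotZr uv mulr1.
  have bvv : mxdot v (X *m v) = X i i + s * X i j + s * X j i + s ^+ 2 * X j j.
    rewrite /v mulmxDr -scalemxAr !mxdotDl !mxdotDr !mxdotZl !mxdotZr !bil_delta; ring.
  have bvu : mxdot v (X *m u) = X i i + s * X j i.
    by rewrite /v !mxdotDl !mxdotZl !bil_delta.
  have buu : mxdot u (X *m u) = X i i by rewrite bil_delta.
  rewrite bvv bvu buu uu vv.
  set p := 1 + s ^+ 2.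
  have pp : 0 < p by rewrite ltr_pwDl // sqr_ge0.
  move=> h.
  have : (\tr X - 2 / p * (X i i + s * X i j + s * X j i + s ^+ 2 * X j j) -
      2 / 1 * (X i i - 2 / p * (X i i + s * X j i)) - \tr X) * p / 2 <= 0.
    by rewrite pmulr_lle0 // ?invr_gt0 // pmulr_lle0 // subr_le0.
  have -> : (\tr X - 2 / p * (X i i + s * X i j + s * X j i + s ^+ 2 * X j j) -
      2 / 1 * (X i i - 2 / p * (X i i + s * X j i)) - \tr X) * p / 2
      = s * (X j i - X i j) - s ^+ 2 * (X i i + X j j).
    by rewrite /p; field; rewrite -/p gt_eqF.
  by rewrite subr_le0.
by apply/eqP; rewrite -subr_eq0; apply/eqP; exact: quad0 Hs.
Qed.


Lemma wwx k (w x : 'cV[R]_k) : mxdot x ((w *m w^T) *m x) = mxdot w x ^+ 2.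
Proof. by rewrite -mulmxA cv_dot mul_mx_scalar mxdotZr expr2 mxdotC. Qed.

Lemma psd_diag0 k (S : 'M[R]_k) (i b : 'I_k) :
  (forall u : 'cV[R]_k, 0 <= mxdot u (S *m u)) -> S i i = 0 ->
  S i b + S b i = 0.
Proof.
move=> H z; apply: (@quad0 _ (S b b)) => t.
have := H (delta_mx i 0 - t *: delta_mx b 0).
rewrite mulmxBr -scalemxAr !mxdotBl !mxdotBr !mxdotZl !mxdotZr !bil_delta z.
move=> h; lra.
Qed.

Lemma chol_aux k d (S : 'M[R]_k) : S^T = S -> (forall u : 'cV[R]_k, 0 <= mxdot u (S *m u)) ->
  (forall a b : 'I_k, (a < k - d)%N -> S a b = 0) ->
  exists ws : seq 'cV[R]_k, S = \sum_(w <- ws) w *m w^T.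
Proof.
elim: d S => [|d IH] S Ssym Spsd Sz.
  exists [::]; rewrite big_nil; apply/matrixP => a b; rewrite mxE Sz //.
  by rewrite subn0 ltn_ord.
have [kd|dk] := leqP k d.
  by apply: IH => // a b; rewrite (_ : k - d = 0)%N ?ltn0 //; lia.
have ik : (k - d.+1 < k)%N by lia.
set i := Ordinal ik.
have Ssymab : forall a b, S a b = S b a.
  by move=> a b; rewrite -[in LHS]Ssym mxE.
have [z|nz] := eqVneq (S i i) 0.
  apply: IH => // a b ab.
  have [ai|ai] := eqVneq a i.
    subst a; have := psd_diag0 b Spsd z; rewrite (Ssymab b i).
    by move/eqP; rewrite -mulr2n mulrn_eq0 /= => /eqP.
  apply: Sz; move: ai; rewrite -val_eqE /= => ai; lia.
have Sii : 0 < S i i.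
  have := Spsd (delta_mx i 0); rewrite bil_delta => h.
  by rewrite lt_neqAle eq_sym nz h.
set w : 'cV[R]_k := (Num.sqrt (S i i))^-1 *: (S *m delta_mx i 0).
have wE : forall a, w a 0 = (Num.sqrt (S i i))^-1 * S a i.
  by move=> a; rewrite /w mxE -colE mxE.
have wwE : forall a b, (w *m w^T) a b = S a i * S b i / S i i.
  move=> a b; rewrite mxE big_ord1 [w^T _ _]mxE [w a _]wE [w b _]wE.
  rewrite mulrACA -invfM -expr2 sqr_sqrtr ?ltW //.
  by rewrite mulrC.
have [ws' Hws'] : exists ws' : seq 'cV[R]_k, S - w *m w^T = \sum_(w <- ws') w *m w^T.
  apply: IH.
  - by rewrite linearB /= trmx_mul trmxK Ssym.
  - move=> x.
    set c := mxdot (S *m delta_mx i 0) x.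
    have wx : mxdot w x = (Num.sqrt (S i i))^-1 * c by rewrite /w mxdotZl.
    set y := x - (c / S i i) *: delta_mx i 0.
    have := Spsd y.
    have c2 : mxdot (delta_mx i 0) (S *m x) = c by rewrite /c mxdot_adj Ssym.
    have c3 : mxdot x (S *m delta_mx i 0) = c by rewrite mxdotC.
    rewrite /y mulmxBr -scalemxAr !mxdotBl !mxdotBr !mxdotZl !mxdotZr c2 c3 bil_delta.
    rewrite mulmxBl mxdotBr wwx wx exprMn exprVn (sqr_sqrtr (ltW Sii)).
    set B := mxdot x (S *m x) => h.
    have -> : B - (S i i)^-1 * c ^+ 2 =
      B - c / S i i * c - (c / S i i * c - c / S i i * (c / S i i * S i i)).
      by field; rewrite gt_eqF.
    exact: h.
  - move=> a b ab; rewrite mxE [X in _ + X]mxE wwE.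
    have [ai|ai] := eqVneq a i.
      by subst a; rewrite (Ssymab b i) mulrAC divff // mul1r; apply/eqP; rewrite subr_eq0.
    have ai' : (a < k - d.+1)%N by move: ai; rewrite -val_eqE /= => ai; lia.
    by rewrite (Sz a b) // (Sz a i) // !mul0r subr0.
exists (w :: ws'); rewrite big_cons -Hws'.
by rewrite addrC subrK.
Qed.

Lemma chol k (S : 'M[R]_k) : S^T = S -> (forall u : 'cV[R]_k, 0 <= mxdot u (S *m u)) ->
  exists ws : seq 'cV[R]_k, S = \sum_(w <- ws) w *m w^T.
Proof. by move=> h1 h2; apply: (@chol_aux k k) => // a b; rewrite subnn. Qed.


Lemma mxdot_outer m n (A : 'M[R]_(m, n)) (w : 'cV[R]_m) (z : 'cV[R]_n) :
  mxdot A (w *m z^T) = mxdot (A *m z) w.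
Proof. by rewrite !mxdotE trmx_mul trmxK mulmxA. Qed.

Lemma key_rows m n (O G : 'M[R]_(m, n)) : O *m O^T = 1%:M ->
  (forall O' : 'M[R]_(m, n), O' *m O'^T = 1%:M -> mxdot O' G <= mxdot O G) ->
  forall P : 'M[R]_(m, n), (forall x : 'cV[R]_n, mxdot (P *m x) (P *m x) <= mxdot x x) ->
  mxdot P G <= mxdot O G.
Proof.
move=> OO Hmax P HP.
set X := O *m G^T.
have [Xsym Xpsd] : X^T = X /\ forall u : 'cV[R]_m, 0 <= mxdot u (X *m u).
  apply: sym_psd_of_max => Q QQ.
  have := Hmax (Q *m O).
  rewrite !mxdotE /X mulmxA; apply.
  by rewrite trmx_mul mulmxA -(mulmxA Q) OO mulmx1.
set Y := G^T *m O.
have Ysym : Y^T = Y.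
  have [] := @sym_psd_of_max n Y => // Q QQ.
  have e1 : mxdot (O *m Q) G = \tr (Q *m Y).
    by rewrite mxdotE -mulmxA mxtrace_mulC -mulmxA.
  have e2 : mxdot O G = \tr Y by rewrite mxdotE mxtrace_mulC.
  rewrite -e1 -e2; apply: Hmax.
  by rewrite trmx_mul mulmxA -(mulmxA O) QQ mulmx1.
have GX : G = X *m O.
  rewrite /X -mulmxA -/Y -Ysym /Y trmx_mul trmxK mulmxA.
  by rewrite OO mul1mx.
have [ws Hws] := chol Xsym Xpsd.
rewrite GX Hws.
elim: ws {Hws} => [|w ws IH]; first by rewrite big_nil mul0mx !(mxdotC _ 0) !mxdot0l.
rewrite big_cons mulmxDl !mxdotDr; apply: lerD => //.
rewrite -mulmxA -[w^T *m O]trmxK trmx_mul trmxK !mxdot_outer.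
rewrite [X in _ <= mxdot X _]mulmxA OO mul1mx.
set z := O^T *m w.
have zz : mxdot z z = mxdot w w by rewrite /z mxdot_adj trmxK mulmxA OO mul1mx.
have h1 := mxdot_cs (P *m z) w.
have h2 := HP z.
have h3 := mxdot_ge0 (P *m z).
have h4 := mxdot_ge0 w.
rewrite zz in h2.
have h5 : mxdot (P *m z) w ^+ 2 <= mxdot w w ^+ 2.
  apply: le_trans h1 _; rewrite expr2; exact: ler_wpM2r.
move: h5 h4; generalize (mxdot (P *m z) w) (mxdot w w) => d a h5 h4.
nra.
Qed.


Lemma frobE m n (A : 'M[R]_(m, n)) : frob A = Num.sqrt (mxdot A A).
Proof.
by rewrite /frob /mxdot; congr Num.sqrt; apply: eq_bigr => i _; apply: eq_bigr => j _.
Qed.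

Lemma frob_le_c m n (A : 'M[R]_(m, n)) c : frob A <= c -> mxdot A A <= c ^+ 2.
Proof. by move=> h; rewrite -!frob_sq !expr2; apply: ler_pM => //; exact: frob_ge0. Qed.

Lemma frob_c_le m n (A : 'M[R]_(m, n)) c : 0 <= c -> mxdot A A <= c ^+ 2 -> frob A <= c.
Proof. by move=> c0 h; rewrite frobE -(ger0_norm c0) -sqrtr_sqr; apply: ler_wsqrtr. Qed.

Lemma mxdot_row m n (A : 'M[R]_(m, n)) (x : 'cV[R]_n) (i : 'I_m) :
  (A *m x) i 0 = mxdot (row i A)^T x.
Proof.
rewrite mxE /mxdot; apply: eq_bigr => j _; rewrite big_ord1 !mxE.
by [].
Qed.

Lemma mxdot_rows m n (A : 'M[R]_(m, n)) :
  mxdot A A = \sum_(i < m) mxdot (row i A)^T (row i A)^T.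
Proof.
rewrite /mxdot; apply: eq_bigr => i _; apply: eq_bigr => j _.
by rewrite big_ord1 !mxE.
Qed.

Lemma mxdot_cv_sum m (x : 'cV[R]_m) : mxdot x x = \sum_(i < m) x i 0 ^+ 2.
Proof. by rewrite /mxdot; apply: eq_bigr => i _; rewrite big_ord1 expr2. Qed.

Lemma frob_mul_le m n (A : 'M[R]_(m, n)) (x : 'cV[R]_n) :
  mxdot (A *m x) (A *m x) <= mxdot A A * mxdot x x.
Proof.
rewrite mxdot_cv_sum mxdot_rows mulr_suml; apply: ler_sum => i _.
rewrite mxdot_row; exact: mxdot_cs.
Qed.

Lemma spec_has_ub m n (A : 'M[R]_(m, n)) :
  has_ubound [set frob (A *m x) | x in [set x : 'cV[R]_n | frob x = 1]].
Proof.
exists (frob A) => _ [x /= x1 <-].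
apply: frob_c_le; first exact: frob_ge0.
have := frob_mul_le A x.
by rewrite -(frob_sq x) x1 expr1n mulr1 frob_sq.
Qed.

Lemma spec_contr m n (P : 'M[R]_(m, n)) : spec_norm P <= 1 ->
  forall x : 'cV[R]_n, mxdot (P *m x) (P *m x) <= mxdot x x.
Proof.
move=> hP x.
have [z|nz] := eqVneq (mxdot x x) 0.
  by move/mxdot_eq0: z => ->; rewrite mulmx0 !mxdot0l.
have fx : 0 < frob x.
  by rewrite lt_neqAle frob_ge0 andbT; apply: contra nz => /eqP h; rewrite -frob_sq -h expr0n.
set x' := (frob x)^-1 *: x.
have fx' : frob x' = 1.
  rewrite frobE /x' mxdotZl mxdotZr -frob_sq mulrA -expr2 -exprMn mulVf ?gt_eqF //.
  by rewrite expr1n sqrtr1.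
have h : frob (P *m x') <= 1.
  apply: le_trans hP; apply: ub_le_sup; first exact: spec_has_ub.
  by exists x'.
have : mxdot (P *m x') (P *m x') <= 1 by rewrite -(expr1n _ 2); exact: frob_le_c.
rewrite /x' -scalemxAr mxdotZl mxdotZr mulrA.
have hx : 0 < mxdot x x by rewrite -frob_sq exprn_gt0.
by rewrite -invfM -expr2 frob_sq mulrC ler_pdivrMr // mul1r.
Qed.


Lemma frob_delta n (n0 : (0 < n)%N) : frob (delta_mx (Ordinal n0) 0 : 'cV[R]_n) = 1.
Proof. by rewrite frobE dot_delta eqxx sqrtr1. Qed.

Lemma spec_le m n (A : 'M[R]_(m, n)) s : (0 < n)%N -> 0 <= s ->
  (forall x : 'cV[R]_n, mxdot (A *m x) (A *m x) <= s ^+ 2 * mxdot x x) -> spec_norm A <= s.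
Proof.
move=> n0 s0 H; apply: ge_sup.
  set x0 : 'cV[R]_n := delta_mx (Ordinal n0) 0.
  by exists (frob (A *m x0)), x0 => //=; rewrite frob_delta.
move=> _ [x /= x1 <-]; apply: frob_c_le => //.
by have := H x; rewrite -(frob_sq x) x1 expr1n mulr1.
Qed.

Lemma mxdot_cols m n (A : 'M[R]_(m, n)) :
  mxdot A A = \sum_(j < n) mxdot (col j A) (col j A).
Proof.
rewrite /mxdot exchange_big; apply: eq_bigr => j _; apply: eq_bigr => i _.
by rewrite big_ord1 !mxE.
Qed.

Lemma nuc_has_ub m n (A : 'M[R]_(m, n)) :
  has_ubound [set mxdot O A | O in [set O : 'M[R]_(m, n) | spec_norm O <= 1]].
Proof.
exists ((n%:R + mxdot A A) / 2).
move=> _ [Q /= hO <-].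
have hOO : mxdot Q Q <= n%:R.
  rewrite mxdot_cols -[X in X%:R]card_ord -sumr_const; apply: ler_sum => j _.
  have := spec_contr hO (delta_mx j 0); rewrite -colE dot_delta eqxx //.
have := mxdot_ge0 (Q - A).
rewrite !(mxdotBl, mxdotBr) (mxdotC A Q) => h.
rewrite ler_pdivlMr //; lra.
Qed.

Lemma nuc_ub m n (A P : 'M[R]_(m, n)) : spec_norm P <= 1 -> mxdot P A <= nuc_norm A.
Proof. by move=> hP; apply: ub_le_sup; [exact: nuc_has_ub | exists P]. Qed.

Lemma spec0 m n : (0 < n)%N -> spec_norm (0 : 'M[R]_(m, n)) <= 1.
Proof. by move=> n0; apply: spec_le => // x; rewrite mul0mx mxdot0l expr1n mul1r mxdot_ge0. Qed.

Lemma nuc_le m n (A : 'M[R]_(m, n)) c : (0 < n)%N ->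
  (forall P : 'M[R]_(m, n), spec_norm P <= 1 -> mxdot P A <= c) -> nuc_norm A <= c.
Proof.
move=> n0 H; apply: ge_sup; first by exists (mxdot 0 A), 0 => //=; exact: spec0.
by move=> _ [P /= hP <-]; exact: H.
Qed.

Lemma nuc_ge0 m n (A : 'M[R]_(m, n)) : (0 < n)%N -> 0 <= nuc_norm A.
Proof. by move=> n0; have := nuc_ub A (spec0 m n0); rewrite mxdot0l. Qed.

Lemma contr_tr m n (P : 'M[R]_(m, n)) :
  (forall x : 'cV[R]_n, mxdot (P *m x) (P *m x) <= mxdot x x) ->
  forall y : 'cV[R]_m, mxdot (P^T *m y) (P^T *m y) <= mxdot y y.
Proof.
move=> H y; set z := P^T *m y.
have e : mxdot z z = mxdot y (P *m z) by rewrite {1}/z mxdot_adj trmxK.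
have h1 := mxdot_cs y (P *m z).
have h2 := H z.
have h3 := mxdot_ge0 z; have h4 := mxdot_ge0 y; have h5 := mxdot_ge0 (P *m z).
rewrite -e in h1.
have h6 : mxdot z z ^+ 2 <= mxdot y y * mxdot z z.
  by apply: le_trans h1 _; apply: ler_wpM2l.
move: h6 h3 h4; generalize (mxdot z z) (mxdot y y) => a b h6 h3 h4.
nra.
Qed.


Lemma orth_nuc m n (G O : 'M[R]_(m, n)) : (0 < n)%N ->
  is_orth G O -> nuc_norm G <= mxdot O G.
Proof.
move=> n0 [sO Hmin].
have Hcomp : forall O', semi_orth O' -> mxdot O O = mxdot O' O' -> mxdot O' G <= mxdot O G.
  move=> O' sO' e; have := frob_le_c (Hmin O' sO'); rewrite frob_sq.
  rewrite !(mxdotBl, mxdotBr) e (mxdotC G O) (mxdotC G O') => h; lra.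
apply: nuc_le => // P hP.
case: sO => OO.
  apply: (key_rows OO) (spec_contr hP) => O' hO'.
  by apply: Hcomp; [left | rewrite !mxdotE hO' OO].
rewrite -(mxdot_tr P) -(mxdot_tr O); apply: key_rows.
- by rewrite trmxK.
- move=> W hW; rewrite -[W]trmxK !mxdot_tr; apply: Hcomp.
    by right; rewrite trmxK.
  by rewrite !mxdotE mxtrace_mulC OO trmxK mxtrace_mulC hW.
- exact: contr_tr (spec_contr hP).
Qed.


Lemma semi_orth_contr m n (O : 'M[R]_(m, n)) : semi_orth O ->
  forall x : 'cV[R]_n, mxdot (O *m x) (O *m x) <= mxdot x x.
Proof.
case=> OO x.
  rewrite -(trmxK O); apply: contr_tr => y.
  by rewrite mxdot_adj trmxK mulmxA OO mul1mx.
by rewrite mxdot_adj mulmxA OO mul1mx.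
Qed.

Lemma spec_scale_orth m n (O : 'M[R]_(m, n)) (s : R) : (0 < n)%N -> 0 <= s -> semi_orth O ->
  spec_norm (- (s *: O)) <= s.
Proof.
move=> n0 s0 sO; apply: spec_le => // x.
rewrite mulNmx mxdotNl mxdotNr opprK -scalemxAl mxdotZl mxdotZr mulrA -expr2.
by apply: ler_wpM2l; [exact: sqr_ge0 | exact: semi_orth_contr].
Qed.

Variables (m n : nat).
Implicit Types (f : 'M[R]_(m, n) -> R).

Lemma grad_dot f (X H : 'M[R]_(m, n)) : differentiable f X ->
  mxdot (grad f X) H = derive f X H.
Proof.
move=> df; rewrite deriveE // {2}(matrix_sum_delta H) linear_sum /mxdot.
apply: eq_bigr => i _; rewrite linear_sum; apply: eq_bigr => j _.
by rewrite linearZ /= mxE deriveE // mulrC.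
Qed.


Lemma phi_derive f (X H : 'M[R]_(m, n)) (c : R) : differentiable f (X + c *: H) ->
  is_derive c 1 (fun s : R => f (X + s *: H)) (derive f (X + c *: H) H).
Proof.
move=> df.
have eqf : (fun h : R => h^-1 *: (((fun s : R => f (X + s *: H)) \o shift c) (h *: 1)
      - (fun s : R => f (X + s *: H)) c)) =
    (fun h : R => h^-1 *: ((f \o shift (X + c *: H)) (h *: H) - f (X + c *: H))).
  apply/funext => h /=; congr (_ *: (f _ - _)).
  rewrite /shift /= (_ : h%:A = h); last by rewrite -[RHS]mulr1.
  by rewrite scalerDl addrCA addrC.
split; first by rewrite /derivable eqf; exact: diff_derivable.
by rewrite /derive eqf.
Qed.


Lemma descent f (Lc a : R) (X O : 'M[R]_(m, n)) : (0 < n)%N ->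
  (forall Y, differentiable f Y) -> 0 < Lc ->
  (forall Y Z, nuc_norm (grad f Y - grad f Z) <= Lc * spec_norm (Y - Z)) ->
  0 <= a -> semi_orth O ->
  f (X - a *: O) <= f X - a * mxdot O (grad f X) + Lc * a ^+ 2.
Proof.
move=> n0 df L0 HL a0 sO.
have [az|apos] := eqVneq a 0.
  by rewrite az scale0r subr0 mul0r subr0 expr0n /= mulr0 addr0.
have ap : 0 < a by rewrite lt_neqAle eq_sym apos a0.
set H := - (a *: O).
set phi := fun s : R => f (X + s *: H).
have hd : forall x : R, is_derive x (1 : R) phi (derive f (X + x *: H) H).
  by move=> x; apply: phi_derive.
have [c cI hc] := @MVT R phi (fun x => derive f (X + x *: H) H) 0 1 ltr01
  (fun x _ => hd x)
  (derivable_within_continuous (fun x _ => @ex_derive _ _ _ _ _ _ _ (hd x))).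
move: cI; rewrite in_itv /= => /andP [c0 c1].
move: hc; rewrite /phi scale1r scale0r addr0 subr0 mulr1 -grad_dot //.
rewrite -[grad f (X + c *: H)](subrK (grad f X)) mxdotDl.
set D := grad f (X + c *: H) - grad f X.
have e1 : mxdot (grad f X) H = - (a * mxdot O (grad f X)).
  by rewrite /H mxdotNr mxdotZr mxdotC.
have e2 : mxdot D H = a * mxdot (- O) D.
  by rewrite /H -scalerN mxdotC mxdotZl.
have hO : spec_norm (- O) <= 1.
  by rewrite -(scale1r O); apply: spec_scale_orth.
have h1 : mxdot (- O) D <= nuc_norm D by apply: nuc_ub.
have h2 : nuc_norm D <= Lc * (c * a).
  apply: le_trans (HL _ _) _; rewrite addrC addKr /H scalerN scalerA.
  by rewrite ler_pM2l //; apply: spec_scale_orth => //; rewrite mulr_ge0 // ltW.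
rewrite e1 e2 => hc.
have h3 : a * mxdot (- O) D <= Lc * a ^+ 2.
  have h4 : a * mxdot (- O) D <= a * (Lc * (c * a)) by rewrite ler_pM2l // (le_trans h1 h2).
  apply: (le_trans h4); rewrite -subr_ge0.
  have -> : Lc * a ^+ 2 - a * (Lc * (c * a)) = Lc * a ^+ 2 * (1 - c) by ring.
  apply: mulr_ge0; last by rewrite subr_ge0 ltW.
  by apply: mulr_ge0; [exact: ltW | exact: sqr_ge0].
rewrite -subr_ge0; rewrite -subr_ge0 in h3.
have -> : f X - a * mxdot O (grad f X) + Lc * a ^+ 2 - f (X + H) =
  Lc * a ^+ 2 - a * mxdot (- O) D by rewrite -(subrK (f X) (f (X + H))) hc; ring.
exact: h3.
Qed.

End LA.

Section Seq.
Variable R : realType.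

Lemma v_pos (v d : nat -> R) : 0 < v 0%N -> (forall t, 0 <= d t) ->
  (forall t, v t.+1 = Num.sqrt (v t ^+ 2 + d t)) -> forall t, 0 < v t.
Proof.
move=> v0 d0 hv; elim=> // t IH; rewrite hv sqrtr_gt0.
by apply: ltr_wpDr => //; rewrite exprn_gt0.
Qed.

Lemma v_sq (v d : nat -> R) : (forall t, 0 <= d t) ->
  (forall t, v t.+1 = Num.sqrt (v t ^+ 2 + d t)) -> forall t, v t.+1 ^+ 2 = v t ^+ 2 + d t.
Proof. by move=> d0 hv t; rewrite hv sqr_sqrtr // addr_ge0 ?sqr_ge0. Qed.

Lemma sum_log (v d : nat -> R) : 0 < v 0%N -> (forall t, 0 <= d t) ->
  (forall t, v t.+1 = Num.sqrt (v t ^+ 2 + d t)) ->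
  forall T, \sum_(t < T) d t / v t.+1 ^+ 2 <= ln (v T ^+ 2) - ln (v 0%N ^+ 2).
Proof.
move=> v0 d0 hv; have vp := v_pos v0 d0 hv; have vs := v_sq d0 hv.
elim=> [|T IH]; first by rewrite big_ord0 subrr.
rewrite big_ord_recr /=.
have -> : ln (v T.+1 ^+ 2) - ln (v 0%N ^+ 2) =
  (ln (v T ^+ 2) - ln (v 0%N ^+ 2)) + (ln (v T.+1 ^+ 2) - ln (v T ^+ 2)) by ring.
apply: lerD => //.
have p1 : 0 < v T.+1 ^+ 2 by rewrite exprn_gt0.
have p0 : 0 < v T ^+ 2 by rewrite exprn_gt0.
set y := v T ^+ 2 / v T.+1 ^+ 2.
have yp : 0 < y by rewrite divr_gt0.
have hy : ln y <= y - 1.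
  have := @le_ln1Dx R (y - 1); rewrite [1 + _]addrC subrK; apply.
  by rewrite ltrBrDl addrC addNr.
have -> : d T / v T.+1 ^+ 2 = 1 - y.
  by rewrite /y vs; field; rewrite -vs gt_eqF.
have -> : ln (v T.+1 ^+ 2) - ln (v T ^+ 2) = - ln y.
  by rewrite /y ln_div ?posrE // opprB.
lra.
Qed.

Lemma v_bound (v d : nat -> R) (g : R) : (forall t, 0 <= d t) -> (forall t, d t <= g) ->
  (forall t, v t.+1 = Num.sqrt (v t ^+ 2 + d t)) ->
  forall T, v T ^+ 2 <= v 0%N ^+ 2 + T%:R * g.
Proof.
move=> d0 dg hv; have vs := v_sq d0 hv.
elim=> [|T IH]; first by rewrite mul0r addr0.
rewrite vs -natr1 mulrDl mul1r addrA; exact: lerD.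
Qed.


Lemma time_bound (q K : R) : 0 < q -> 0 < K -> exists T0 : nat, (0 < T0)%N /\
  forall T : nat, (T0 <= T)%N -> (T%:R `^ (- q)) ^+ 2 * ln (T%:R * K) <= 1.
Proof.
move=> q0 K0.
set N := K `^ q / q.
have N0 : 0 <= N by rewrite divr_ge0 ?powR_ge0 // ltW.
exists (Num.truncn (N `^ q^-1)).+1; split => // T hT.
have hT' : N `^ q^-1 < T%:R.
  apply: (lt_le_trans (truncnS_gt _)); by rewrite ler_nat.
have Tp : 0 < T%:R :> R by apply: le_lt_trans hT'; exact: powR_ge0.
set z := T%:R `^ q.
have zp : 0 < z by rewrite powR_gt0.
have Nz : N <= z.
  have := @ge0_ler_powR R q (ltW q0) _ _ (powR_ge0 _ _) (ltW Tp) (ltW hT').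
  by rewrite -powRrM mulVf ?gt_eqF // powRr1.
rewrite powRN -/z.
have TKp : 0 < T%:R * K by rewrite mulr_gt0.
have h1 : ln (T%:R * K) <= z * K `^ q / q.
  have h := ln_sublinear (powR_gt0 q TKp).
  rewrite ln_powR (powRM _ (ltW Tp) (ltW K0)) -/z in h.
  by rewrite ler_pdivlMr // [_ * q]mulrC; exact: ltW.
apply: le_trans (ler_wpM2l _ h1) _; first by rewrite sqr_ge0.
have -> : z^-1 ^+ 2 * (z * K `^ q / q) = N / z.
  by rewrite /N; field; rewrite !gt_eqF.
by rewrite ler_pdivrMr // mul1r.
Qed.

End Seq.

Lemma max_sq (R : realType) (x y : R) : 0 <= x -> 0 <= y -> Num.max x y ^+ 2 <= x ^+ 2 + y ^+ 2.
Proof.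
move=> x0 y0; rewrite maxEle; case: ifP => _.
  by rewrite lerDr sqr_ge0.
by rewrite lerDl sqr_ge0.
Qed.

Unset Implicit Arguments.

Theorem theorem2 (R : realType) :
  exists C : R, 0 < C /\
  forall (m n : nat) (f : 'M[R]_(m, n) -> R) (Lc gamma v0 q : R)
         (Theta0 Thetastar : 'M[R]_(m, n)),
    (0 < m)%N -> (0 < n)%N ->
    (forall X, differentiable f X) ->
    (forall X, f Thetastar <= f X) ->
    0 < Lc ->
    (forall X Y, nuc_norm (grad f X - grad f Y) <= Lc * spec_norm (X - Y)) ->
    0 < gamma -> 0 < v0 -> 0 < q ->
    exists T0 : nat, forall (T : nat), (T0 <= T)%N ->
      forall (Theta M O : nat -> 'M[R]_(m, n)) (v : nat -> R),
        adago_run f (T%:R `^ (- q)) 0 gamma (T%:R `^ (- 2^-1)) Theta0 v0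
                  Theta M O v ->
        T%:R^-1 * \sum_(t < T) nuc_norm (grad f (Theta t))
          <= C * (f Theta0 - f Thetastar + Lc) / Num.sqrt T%:R.
Proof.
exists 2; split => // m n f Lc gamma v0 q Theta0 Thetastar m0 n0 df fmin L0 HL g0 v00 q0.
have K0 : 0 < 1 + gamma ^+ 2 / v0 ^+ 2.
  have : 0 <= gamma ^+ 2 / v0 ^+ 2 by rewrite divr_ge0 // sqr_ge0.
  lra.
have [T0 [T0p HT0]] := time_bound q0 K0.
exists T0 => T hT Theta M O v [h0 hM0 hv0 hrun].
have Tp : (0 < T)%N by apply: leq_trans hT.
have TR : 0 < T%:R :> R by rewrite ltr0n.
set eps := T%:R `^ (- 2^-1) in hrun.
set eta := T%:R `^ (- q) in hrun.
set sT := Num.sqrt (T%:R : R).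
have sTp : 0 < sT by rewrite sqrtr_gt0.
have epsE : eps = sT^-1 by rewrite /eps powRN powR12_sqrt // ltW.
have epsp : 0 < eps by rewrite epsE invr_gt0.
have etap : 0 < eta by rewrite powR_gt0.
set G := fun t => grad f (Theta t).
set d := fun t => Num.min (frob (G t) ^+ 2) (gamma ^+ 2).
set alpha := fun t => Num.max eps (eta * Num.min (frob (G t)) gamma / v t.+1).
have d0 : forall t, 0 <= d t by move=> t; rewrite /d le_min !sqr_ge0.
have dg : forall t, d t <= gamma ^+ 2 by move=> t; rewrite /d ge_min lexx orbT.
have hv : forall t, v t.+1 = Num.sqrt (v t ^+ 2 + d t).
  by move=> t; have [_ hvt _ _] := hrun t.
have vp : forall t, 0 < v t by apply: v_pos => //; rewrite hv0.
have alpha_ge : forall t, eps <= alpha t by move=> t; rewrite /alpha le_max lexx.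
have step : forall t, f (Theta t.+1) <= f (Theta t) - alpha t * nuc_norm (G t) + Lc * alpha t ^+ 2.
  move=> t; have [hMt _ hOt hTh] := hrun t.
  have hM : M t.+1 = G t by rewrite hMt scale0r add0r subr0 scale1r.
  rewrite hM in hOt.
  rewrite hTh -/(alpha t).
  apply: le_trans (descent (Theta t) n0 df L0 HL (ltW (lt_le_trans epsp (alpha_ge t))) hOt.1) _.
  rewrite lerD2r lerD2l lerN2; apply: ler_wpM2l; first exact: ltW (lt_le_trans epsp (alpha_ge t)).
  exact: orth_nuc.
have tele : forall N, \sum_(t < N) alpha t * nuc_norm (G t) <=
    f (Theta 0%N) - f (Theta N) + Lc * \sum_(t < N) alpha t ^+ 2.
  elim=> [|N IH]; first by rewrite !big_ord0 subrr mulr0 addr0.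
  rewrite !big_ord_recr /= mulrDr; have := step N; lra.
have nucge : forall t, 0 <= nuc_norm (G t) by move=> t; exact: nuc_ge0.
have hsum1 : eps * \sum_(t < T) nuc_norm (G t) <= \sum_(t < T) alpha t * nuc_norm (G t).
  rewrite mulr_sumr; apply: ler_sum => t _; exact: ler_wpM2r.
have hsq : \sum_(t < T) alpha t ^+ 2 <= 2.
  have h1 : forall t, alpha t ^+ 2 <= eps ^+ 2 + eta ^+ 2 * (d t / v t.+1 ^+ 2).
    move=> t; rewrite /alpha; apply: le_trans (max_sq (ltW epsp) _) _.
      by rewrite divr_ge0 ?mulr_ge0 ?le_min ?frob_ge0 ?ltW.
    rewrite lerD2l expr_div_n exprMn -mulrA ler_wpM2l ?sqr_ge0 //.
    rewrite ler_pM2r ?invr_gt0 ?exprn_gt0 //.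
    have b0 : 0 <= Num.min (frob (G t)) gamma by rewrite le_min frob_ge0 ltW.
    rewrite /d le_min; apply/andP; split; rewrite expr2 [X in _ <= X]expr2;
      apply: ler_pM => //; by rewrite ge_min ?lexx ?orbT.
  have h2 : \sum_(t < T) alpha t ^+ 2 <= \sum_(t < T) (eps ^+ 2 + eta ^+ 2 * (d t / v t.+1 ^+ 2)).
    by apply: ler_sum => t _; exact: h1.
  apply: le_trans h2 _.
  rewrite big_split /= sumr_const card_ord -mulr_sumr.
  have -> : eps ^+ 2 *+ T = 1.
    by rewrite epsE exprVn sqr_sqrtr ?ltW // -mulr_natr mulVf // gt_eqF.
  have -> : (2 : R) = 1 + 1 by [].
  rewrite lerD2l.
  have hl := sum_log (vp 0%N) d0 hv T.
  have hb := v_bound d0 dg hv T.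
  have vT : 0 < v T ^+ 2 by rewrite exprn_gt0.
  have v0p : 0 < v 0%N ^+ 2 by rewrite exprn_gt0.
  have hln : ln (v T ^+ 2) - ln (v 0%N ^+ 2) <= ln (T%:R * (1 + gamma ^+ 2 / v0 ^+ 2)).
    rewrite -ln_div ?posrE // ler_ln ?posrE ?divr_gt0 ?mulr_gt0 //.
    rewrite ler_pdivrMr // hv0; rewrite hv0 in hb; apply: le_trans hb _.
    have v0s : 0 < v0 ^+ 2 by rewrite exprn_gt0.
    rewrite (_ : T%:R * (1 + gamma ^+ 2 / v0 ^+ 2) * v0 ^+ 2 = T%:R * v0 ^+ 2 + T%:R * gamma ^+ 2);
      last by field; rewrite gt_eqF.
    by rewrite lerD2r ler_peMl ?sqr_ge0 // ler1n.
  apply: le_trans (ler_wpM2l (sqr_ge0 _) (le_trans hl hln)) _.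
  exact: HT0.
have Delta0 : 0 <= f Theta0 - f Thetastar by rewrite subr_ge0.
have hmain : sT^-1 * \sum_(t < T) nuc_norm (G t) <= f Theta0 - f Thetastar + 2 * Lc.
  rewrite -epsE; apply: le_trans hsum1 _; apply: le_trans (tele T) _.
  rewrite h0; have := fmin (Theta T); have := ler_wpM2l (ltW L0) hsq.
  lra.
have Tsq : T%:R^-1 = sT^-1 * sT^-1 :> R.
  by rewrite -invfM -expr2 sqr_sqrtr // ltW.
rewrite Tsq -[_ * _ * \sum_(t < T) _]mulrA.
have sTi : 0 < sT^-1 by rewrite invr_gt0.
apply: le_trans (_ : _ <= sT^-1 * (f Theta0 - f Thetastar + 2 * Lc)) _.
  by rewrite ler_pM2l //; exact: hmain.
rewrite [X in _ <= X]mulrC ler_pM2l //.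
lra.
Qed.
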